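(* Let $\psi:\mathbb{H}\to\mathbb{H}$ be a linear isometry. The pair $(\varphi,\psi)=(I_{\mathbb{H}},\psi)$ satisfies (i) $\varphi(\varphi(x)x)=\varphi(x)x$ for all $x$, (ii) $\varphi(\bar x\psi(x))=\bar x\psi(x)$ for all $x$, (iii) $\psi(\psi(y)\bar x+y\varphi(x))=\psi(y)\bar x+y\varphi(x)$ for all $x,y$, if and only if $\psi\in\{I_{\mathbb{H}}\}\cup\{-T_{a,a}\circ\sigma_{\mathbb{H}}: a\in\mathbb{H},\ |a|=1\}$.
   Context: $T_{a,b}(x)=axb$ and $\sigma_{\mathbb{H}}(x)=\bar x$ on the quaternions $\mathbb{H}$; $I_{\mathbb{H}}$ is the identity. *)

(* Defs.v *)
From Stdlib Require Import Reals.
Open Scope R_scope.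

Record quat := Quat { q0 : R; q1 : R; q2 : R; q3 : R }.

(* x = q0 + q1 i + q2 j + q3 k *)
Definition qadd (x y : quat) : quat :=
  Quat (q0 x + q0 y) (q1 x + q1 y) (q2 x + q2 y) (q3 x + q3 y).
Definition qopp (x : quat) : quat := Quat (- q0 x) (- q1 x) (- q2 x) (- q3 x).
Definition qscale (r : R) (x : quat) : quat :=
  Quat (r * q0 x) (r * q1 x) (r * q2 x) (r * q3 x).
Definition qmul (x y : quat) : quat :=
  Quat (q0 x * q0 y - q1 x * q1 y - q2 x * q2 y - q3 x * q3 y)
       (q0 x * q1 y + q1 x * q0 y + q2 x * q3 y - q3 x * q2 y)
       (q0 x * q2 y - q1 x * q3 y + q2 x * q0 y + q3 x * q1 y)
       (q0 x * q3 y + q1 x * q2 y - q2 x * q1 y + q3 x * q0 y).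
Definition qconj (x : quat) : quat := Quat (q0 x) (- q1 x) (- q2 x) (- q3 x).
Definition qnorm (x : quat) : R :=
  sqrt (q0 x * q0 x + q1 x * q1 x + q2 x * q2 x + q3 x * q3 x).

Definition T (a b : quat) (x : quat) : quat := qmul (qmul a x) b.

Definition qlinear (f : quat -> quat) : Prop :=
  (forall x y, f (qadd x y) = qadd (f x) (f y)) /\
  (forall (r : R) x, f (qscale r x) = qscale r (f x)).

Definition qisometry (f : quat -> quat) : Prop :=
  qlinear f /\ forall x, qnorm (f x) = qnorm x.

(* Main.v *)
Require Import Defs.
From Stdlib Require Import Reals Lra Psatz Classical FunctionalExtensionality.
Open Scope R_scope.

Definition nsq (z : quat) : R := q0 z * q0 z + q1 z * q1 z + q2 z * q2 z + q3 z * q3 z.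
Definition dotq (z x : quat) : R := q0 z * q0 x + q1 z * q1 x + q2 z * q2 x + q3 z * q3 x.
Definition uq (z x : quat) : quat :=
  let c := qmul (qconj z) x in Quat 0 (q1 c / nsq z) (q2 c / nsq z) (q3 c / nsq z).
Definition refl (a q : quat) : quat := qadd q (qscale (-2 * dotq q a) a).

Lemma decomp (z x : quat) : nsq z <> 0 ->
  x = qadd (qscale (dotq z x / nsq z) z) (qmul z (uq z x)).
Proof.
  destruct z as [z0 z1 z2 z3], x as [x0 x1 x2 x3]; unfold nsq, dotq, uq; simpl; intro H.
  unfold qadd, qscale, qmul, qconj, nsq; simpl; f_equal; field; exact H.
Qed.

Lemma final (z x : quat) : nsq z <> 0 ->
  qadd (qscale (dotq z x / nsq z) (qopp z)) (qmul z (uq z x)) =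
  qopp (qscale (/ nsq z) (T z z (qconj x))).
Proof.
  destruct z as [z0 z1 z2 z3], x as [x0 x1 x2 x3]; unfold nsq, dotq, uq; simpl; intro H.
  unfold T, qadd, qopp, qscale, qmul, qconj, nsq; simpl; f_equal; field; exact H.
Qed.

Lemma T_scale c z w : T (qscale c z) (qscale c z) w = qscale (c * c) (T z z w).
Proof. destruct z, w; unfold T, qscale, qmul; simpl; f_equal; ring. Qed.

Lemma refl_eq a q : nsq a = 1 -> qopp (T a a (qconj q)) = refl a q.
Proof.
  intro Hn.
  assert (E : qopp (T a a (qconj q)) =
     qadd (qscale (nsq a) q) (qscale (-2 * dotq q a) a)).
  { destruct a, q; unfold nsq, dotq, T, qopp, qadd, qscale, qmul, qconj; simpl; f_equal; ring. }
  rewrite E, Hn. unfold refl. f_equal. destruct q; unfold qscale; simpl; f_equal; ring.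
Qed.

Lemma refl_fix a q : dotq q a = 0 -> refl a q = q.
Proof. intro H; unfold refl; rewrite H; destruct q, a; unfold qadd, qscale; simpl; f_equal; ring. Qed.

Lemma qnorm_nsq a : qnorm a = 1 -> nsq a = 1.
Proof.
  unfold qnorm, nsq; intro H.
  assert (0 <= q0 a * q0 a + q1 a * q1 a + q2 a * q2 a + q3 a * q3 a) by nra.
  rewrite <- (sqrt_sqrt _ H0), H; ring.
Qed.

Lemma qadd_cancel a b c : qadd a b = qadd b c -> a = c.
Proof.
  destruct a, b, c; unfold qadd; simpl; intro H; injection H; intros; f_equal; lra.
Qed.

Lemma nsq_pos y w : w <> y -> 0 < nsq (qadd y (qopp w)).
Proof.
  intro H. destruct y as [y0 y1 y2 y3], w as [w0 w1 w2 w3]; unfold nsq, qadd, qopp; simpl.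
  destruct (Rlt_or_le 0 ((y0 + - w0) * (y0 + - w0) + (y1 + - w1) * (y1 + - w1) +
     (y2 + - w2) * (y2 + - w2) + (y3 + - w3) * (y3 + - w3))) as [h|h]; [exact h|].
  pose proof (Rle_0_sqr (y0 + - w0)); pose proof (Rle_0_sqr (y1 + - w1));
  pose proof (Rle_0_sqr (y2 + - w2)); pose proof (Rle_0_sqr (y3 + - w3)); unfold Rsqr in *.
  assert (a0 : (y0 + - w0) * (y0 + - w0) = 0) by lra.
  assert (a1 : (y1 + - w1) * (y1 + - w1) = 0) by lra.
  assert (a2 : (y2 + - w2) * (y2 + - w2) = 0) by lra.
  assert (a3 : (y3 + - w3) * (y3 + - w3) = 0) by lra.
  apply Rmult_integral in a0, a1, a2, a3.
  exfalso; apply H; f_equal; lra.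
Qed.

Theorem lemma10 (psi : quat -> quat) (Hpsi : qisometry psi) :
  let phi := fun x : quat => x in
  ((forall x, phi (qmul (phi x) x) = qmul (phi x) x) /\
   (forall x, phi (qmul (qconj x) (psi x)) = qmul (qconj x) (psi x)) /\
   (forall x y, psi (qadd (qmul (psi y) (qconj x)) (qmul y (phi x)))
                = qadd (qmul (psi y) (qconj x)) (qmul y (phi x))))
  <->
  (psi = (fun x => x) \/
   exists a : quat, qnorm a = 1 /\ psi = (fun x => qopp (T a a (qconj x)))).
Proof.
  intro phi; unfold phi; clear phi.
  destruct Hpsi as [[Hadd Hsc] _].
  split.
  - intros [_ [_ H3]].
    assert (Hopp : forall x, psi (qopp x) = qopp (psi x)).
    { intro x. assert (E : forall w, qopp w = qscale (-1) w)
        by (intro w; destruct w; unfold qopp, qscale; simpl; f_equal; ring).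
      rewrite !E; apply Hsc. }
    set (one := Quat 1 0 0 0).
    assert (Hinv : forall y, psi (psi y) = y).
    { intro y. specialize (H3 one y).
      assert (E : qadd (qmul (psi y) (qconj one)) (qmul y one) = qadd (psi y) y).
      { destruct (psi y), y; unfold one, qadd, qmul, qconj; simpl; f_equal; ring. }
      rewrite E, Hadd in H3. exact (qadd_cancel _ _ _ H3). }
    set (P := fun y => qadd y (qopp (psi y))).
    assert (HP : forall y, psi (P y) = qopp (P y)).
    { intro y; unfold P; rewrite Hadd, Hopp, Hinv.
      destruct (psi y), y; unfold qadd, qopp; simpl; f_equal; ring. }
    assert (HI : forall y u1 u2 u3, psi (qmul (P y) (Quat 0 u1 u2 u3)) = qmul (P y) (Quat 0 u1 u2 u3)).
    { intros y u1 u2 u3. specialize (H3 (Quat 0 u1 u2 u3) y).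
      assert (E : qadd (qmul (psi y) (qconj (Quat 0 u1 u2 u3))) (qmul y (Quat 0 u1 u2 u3))
                  = qmul (P y) (Quat 0 u1 u2 u3)).
      { unfold P; destruct (psi y), y; unfold qadd, qopp, qmul, qconj; simpl; f_equal; ring. }
      rewrite E in H3; exact H3. }
    destruct (classic (forall y, psi y = y)) as [Hid | Hn].
    + left; apply functional_extensionality; exact Hid.
    + right. apply not_all_ex_not in Hn. destruct Hn as [y Hy].
      set (z := P y).
      assert (HN : 0 < nsq z).
      { unfold z, P. apply nsq_pos. exact Hy. }
      set (s := sqrt (nsq z)).
      assert (Hs : s * s = nsq z) by (apply sqrt_sqrt; lra).
      assert (Hs0 : s <> 0) by (intro e; rewrite e in Hs; lra).
      exists (qscale (/ s) z). split.
      * unfold qnorm. replace (q0 (qscale (/ s) z) * q0 (qscale (/ s) z) + q1 (qscale (/ s) z) * q1 (qscale (/ s) z) +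
   q2 (qscale (/ s) z) * q2 (qscale (/ s) z) + q3 (qscale (/ s) z) * q3 (qscale (/ s) z)) with 1.
        { apply sqrt_1. }
        unfold qscale; cbn [q0 q1 q2 q3]. transitivity (nsq z / (s * s)).
        { rewrite Hs; unfold Rdiv; rewrite Rinv_r; lra. }
        unfold nsq; field; exact Hs0.
      * apply functional_extensionality; intro x.
        rewrite T_scale.
        replace (/ s * / s) with (/ nsq z) by (rewrite <- Hs; field; exact Hs0).
        rewrite <- final by lra.
        rewrite (decomp z x) at 1 by lra.
        rewrite Hadd, Hsc. unfold z. rewrite HP. unfold uq. rewrite HI. reflexivity.
  - intros [Hid | [a [Ha Hpsi]]].
    + subst psi. repeat split; intros; reflexivity.
    + repeat split; try (intros; reflexivity).
      intros x y. apply qnorm_nsq in Ha. subst psi.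
      rewrite !refl_eq by exact Ha. apply refl_fix.
      assert (E : dotq (qadd (qmul (refl a y) (qconj x)) (qmul y x)) a
                  = 2 * q0 x * dotq y a * (1 - nsq a)).
      { destruct a, x, y; unfold refl, dotq, nsq, qadd, qscale, qmul, qconj; simpl; ring. }
      rewrite E, Ha; ring.
Qed.
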